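(* Let $(P,\leqslant)$ be a locally finite poset having a minimum element $\hat{0}$, and suppose $P$ has the Möbius uncertainty property, i.e. whenever $f,g:P\to\mathbb{C}$ are functions, neither identically zero, with $g(z)=\sum_{x\leqslant z} f(x)$ for all $z\in P$, at least one of $\operatorname{supp}(f)=\{x:f(x)\neq0\}$ and $\operatorname{supp}(g)=\{x:g(x)\neq0\}$ is infinite. Then for every subset $S\subset P$ with $1\leqslant |S|\leqslant 2$, there exists $z\in S$ such that there are infinitely many $x\in P$ with $x\geqslant z$ but $x\not\geqslant y$ for every $y\in S\setminus\{z\}$.
   Context: A poset is locally finite if every interval $\{z: x\leqslant z\leqslant y\}$ is finite. *)

(* Defs.v *)
From HB Require Import structures.
From mathcomp Require Import all_boot all_order all_algebra.
From mathcomp Require Import boolp classical_sets functions cardinality fsbigop reals.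
From mathcomp Require Import complex.
Set Implicit Arguments. Unset Strict Implicit. Unset Printing Implicit Defensive.
Import Order.TTheory GRing.Theory Num.Theory.
Local Open Scope classical_set_scope.
Local Open Scope ring_scope.

Definition locally_finite {d} (P : porderType d) : Prop :=
  forall x y : P, finite_set [set z : P | (x <= z)%O /\ (z <= y)%O].

Definition has_minimum {d} (P : porderType d) : Prop :=
  exists m : P, forall x : P, (m <= x)%O.

Definition supp {T : Type} {R : realType} (f : T -> R[i]) : set T :=
  [set x | f x != 0].

(** The sum over the (finite, by local
    finiteness and existence of a minimum) down-set {x | x <= z} is the
    finitely supported sum of fsbigop. *)
Definition mobius_uncertainty {d} (P : porderType d) (R : realType) : Prop :=
  forall f g : P -> R[i],
    (exists x, f x != 0) -> (exists x, g x != 0) ->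
    (forall z : P, g z = \sum_(x \in [set x : P | (x <= z)%O]) f x) ->
    ~ finite_set (supp f) \/ ~ finite_set (supp g).

(* Main.v *)
Require Import Defs.
From HB Require Import structures.
From mathcomp Require Import all_boot all_order all_algebra.
From mathcomp Require Import boolp classical_sets functions cardinality fsbigop reals.
From mathcomp Require Import complex.
Import Order.TTheory GRing.Theory Num.Theory.
Local Open Scope classical_set_scope.

Section S.
Variables (R : realType) (d : Order.disp_t) (P : porderType d).
Local Open Scope ring_scope.

Lemma delta_sum (c : P) (D : set P) :
  \sum_(x \in D) ((x == c)%:R : R[i]) = (`[< D c >])%:R.
Proof.
case: (pselect (D c)) => Dc.
  rewrite asboolT // -(fsbig_widen [set c] D) //.
  - by rewrite fsbig_set1 eqxx.
  - by move=> x ->.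
  - move=> x [Dx /= nx]; rewrite /preimage /=.
    by case: eqP => // xc; exfalso; apply: nx; rewrite xc.
rewrite asboolF // fsbig1 // => x Dx; case: eqP => // xc.
by exfalso; apply: Dc; rewrite -xc.
Qed.

Lemma down_finite (hlf : locally_finite P) (hmin : has_minimum P) (z : P) :
  finite_set [set x : P | (x <= z)%O].
Proof.
case: hmin => m hm.
have -> : [set x : P | (x <= z)%O] = [set x | (m <= x)%O /\ (x <= z)%O].
  by rewrite predeqE => x; split => [h|[]//]; split.
exact: hlf.
Qed.

Lemma sumB_fin (D : set P) (F G : P -> R[i]) : finite_set D ->
  \sum_(x \in D) (F x - G x) = \sum_(x \in D) F x - \sum_(x \in D) G x.
Proof. by move=> fD; rewrite !fsbig_finite // sumrB. Qed.
End S.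

Theorem theorem1p4 (R : realType) (d : Order.disp_t) (P : porderType d)
  (hlf : locally_finite P) (hmin : has_minimum P)
  (hmu : mobius_uncertainty P R) :
  forall S : set P, (exists a b : P, S = [set a; b]) ->
    exists2 z : P, S z &
      ~ finite_set [set x : P | (z <= x)%O /\
                      (forall y : P, S y -> y <> z -> ~ (y <= x)%O)].
Proof.
move=> S [a [b ->]].
apply: contrapT => Hn.
have H : forall z, [set a; b] z ->
    finite_set [set x : P | (z <= x)%O /\
                      (forall y : P, [set a; b] y -> y <> z -> ~ (y <= x)%O)].
  move=> z Sz; apply: contrapT => Hz; apply: Hn; by exists z.
have fdown := @down_finite d P hlf hmin.
case: (eqVneq a b) => [ab|ab]; first subst b.
  have Ha := H a (or_intror erefl).
  pose f := fun x : P => ((x == a)%:R : R[i])%R.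
  pose g := fun z : P => ((a <= z)%O%:R : R[i])%R.
  have := hmu f g.
  case.
  - by exists a; rewrite /f eqxx oner_neq0.
  - by exists a; rewrite /g lexx oner_neq0.
  - move=> z; rewrite /g /f delta_sum; congr (_%:R)%R.
    by rewrite /= asboolb.
  - apply; apply: (sub_finite_set _ (finite_set1 a)) => x; rewrite /supp /f /=.
    by case: (eqVneq x a) => // _; rewrite eqxx.
  - apply; apply: (sub_finite_set _ Ha) => x; rewrite /supp /g /=.
    case: (a <= x)%O => //=; last by rewrite eqxx.
    by move=> _; split => // y [] ->.
have Ha := H a (or_introl erefl).
have Hb := H b (or_intror erefl).
pose f := fun x : P => ((x == a)%:R - (x == b)%:R : R[i])%R.
pose g := fun z : P => ((a <= z)%O%:R - (b <= z)%O%:R : R[i])%R.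
have := hmu f g.
case.
- exists a; rewrite /f eqxx (negbTE ab) subr0 oner_neq0 //.
- case: (boolP (b <= a)%O) => ba.
    exists b; rewrite /g lexx.
    have -> : (a <= b)%O = false.
      by apply/negP => abb; move/eqP: ab; apply; apply: le_anti; rewrite abb ba.
    by rewrite sub0r oppr_eq0 oner_neq0.
  by exists a; rewrite /g lexx (negbTE ba) subr0 oner_neq0.
- move=> z; rewrite /g /f sumB_fin // !delta_sum /= !asboolb //.
- apply; apply: (@sub_finite_set _ _ ([set a] `|` [set b])); last by rewrite finite_setU.
  move=> x.
  rewrite /supp /f /=.
  case: (eqVneq x a) => [->|xa]; first by left.
  case: (eqVneq x b) => [->|xb]; first by right.
  by rewrite subrr eqxx.
- apply; apply: (sub_finite_set _ (_ : finite_set (_ `|` _))); last by rewrite finite_setU; exact: (conj Ha Hb).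
  move=> x; rewrite /supp /g /=.
  case: (boolP (a <= x)%O) => ax; case: (boolP (b <= x)%O) => bx /=.
  + by rewrite subrr eqxx.
  + move=> _; left; split => // y [] -> // _; exact/negP.
  + move=> _; right; split => // y [] -> // _; exact/negP.
  + by rewrite subrr eqxx.
Qed.
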